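(* Let $S$ be a pomonoid and let $Emb$ be the class of all order-embeddings in $\mathbf{Pos}\text{-}S$. Then $(Emb, Emb^{\Box})$ is a weak factorization system in $\mathbf{Pos}\text{-}S$.
   Context: A pomonoid is a monoid with a compatible partial order; $\mathbf{Pos}\text{-}S$ is the category of (right) $S$-posets (posets with a monotone right monoid action of $S$) and action-preserving monotone maps. An order-embedding is an $S$-poset map $f$ with $f(a)\le f(a')\iff a\le a'$. For morphisms $l:A\to B$, $r:C\to D$, $l\Box r$ means every commutative square $ru=vl$ has a diagonal $d:B\to C$ with $dl=u$, $rd=v$; $\mathcal H^{\Box}=\{r: l\Box r\ \forall l\in\mathcal H\}$, ${}^{\Box}\mathcal H=\{l: l\Box r\ \forall r\in\mathcal H\}$. A weak factorization system is a pair $(\mathcal L,\mathcal R)$ such that every morphism factors as an $\mathcal L$-morphism followed by an $\mathcal R$-morphism, $\mathcal R=\mathcal L^{\Box}$ and $\mathcal L={}^{\Box}\mathcal R$. *)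

(* Defs.v *)
Set Implicit Arguments.

Record Pomonoid := {
  pm_car :> Type;
  pm_mul : pm_car -> pm_car -> pm_car;
  pm_one : pm_car;
  pm_le : pm_car -> pm_car -> Prop;
  pm_assoc : forall x y z, pm_mul (pm_mul x y) z = pm_mul x (pm_mul y z);
  pm_mul1l : forall x, pm_mul pm_one x = x;
  pm_mulr1 : forall x, pm_mul x pm_one = x;
  pm_refl : forall x, pm_le x x;
  pm_antisym : forall x y, pm_le x y -> pm_le y x -> x = y;
  pm_trans : forall x y z, pm_le x y -> pm_le y z -> pm_le x z;
  pm_compat : forall x x' y y', pm_le x x' -> pm_le y y' ->
                pm_le (pm_mul x y) (pm_mul x' y')
}.

Record SPoset (S : Pomonoid) := {
  sp_car :> Type;
  sp_le : sp_car -> sp_car -> Prop;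
  sp_act : sp_car -> pm_car S -> sp_car;
  sp_refl : forall a, sp_le a a;
  sp_antisym : forall a b, sp_le a b -> sp_le b a -> a = b;
  sp_trans : forall a b c, sp_le a b -> sp_le b c -> sp_le a c;
  sp_act1 : forall a, sp_act a (pm_one S) = a;
  sp_actM : forall a s t, sp_act (sp_act a s) t = sp_act a (pm_mul S s t);
  sp_act_mono : forall a a' (s t : pm_car S), sp_le a a' -> pm_le S s t ->
                  sp_le (sp_act a s) (sp_act a' t)
}.

Record SHom (S : Pomonoid) (A B : SPoset S) := {
  sh_fun :> sp_car A -> sp_car B;
  sh_mono : forall a a', sp_le A a a' -> sp_le B (sh_fun a) (sh_fun a');
  sh_act : forall a s, sh_fun (sp_act A a s) = sp_act B (sh_fun a) s
}.

Definition MorClass (S : Pomonoid) := forall A B : SPoset S, SHom A B -> Prop.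

Definition is_order_embedding (S : Pomonoid) (A B : SPoset S) (f : SHom A B) : Prop :=
  forall a a', sp_le B (f a) (f a') <-> sp_le A a a'.

Definition Emb (S : Pomonoid) : MorClass S := fun A B f => is_order_embedding f.

Definition llp (S : Pomonoid) (A B C D : SPoset S) (l : SHom A B) (r : SHom C D) : Prop :=
  forall (u : SHom A C) (v : SHom B D),
    (forall a, r (u a) = v (l a)) ->
    exists d : SHom B C, (forall a, d (l a) = u a) /\ (forall b, r (d b) = v b).

Definition rbox (S : Pomonoid) (H : MorClass S) : MorClass S :=
  fun C D r => forall (A B : SPoset S) (l : SHom A B), H A B l -> llp l r.

Definition lbox (S : Pomonoid) (H : MorClass S) : MorClass S :=
  fun A B l => forall (C D : SPoset S) (r : SHom C D), H C D r -> llp l r.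

Definition same_class (S : Pomonoid) (H K : MorClass S) : Prop :=
  forall (A B : SPoset S) (f : SHom A B), H A B f <-> K A B f.

Definition weak_factorization_system (S : Pomonoid) (L R : MorClass S) : Prop :=
  (forall (A B : SPoset S) (f : SHom A B),
     exists (C : SPoset S) (l : SHom A C) (r : SHom C B),
       L A C l /\ R C B r /\ (forall a, r (l a) = f a))
  /\ same_class R (rbox L)
  /\ same_class L (lbox R).

(* Main.v *)
Require Import Defs.
From Stdlib Require Import FunctionalExtensionality PropExtensionality ProofIrrelevance.

Section X.
Variable S : Pomonoid.

Lemma le_mul_l (s t t' : pm_car S) : pm_le S t t' -> pm_le S (pm_mul S s t) (pm_mul S s t').
Proof. intros; apply pm_compat; auto using pm_refl. Qed.

Definition MonF (A : SPoset S) :=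
  { g : pm_car S -> (sp_car A -> Prop) | forall t t', pm_le S t t' -> forall x, g t x -> g t' x }.

Lemma monf_eq (A : SPoset S) (g h : MonF A) : proj1_sig g = proj1_sig h -> g = h.
Proof.
  destruct g as [g pg], h as [h ph]; simpl; intros E; subst h.
  f_equal; apply proof_irrelevance.
Qed.

Definition mle (A : SPoset S) (g h : MonF A) : Prop :=
  forall t x, proj1_sig g t x -> proj1_sig h t x.

Definition mact (A : SPoset S) (g : MonF A) (s : pm_car S) : MonF A.
Proof.
  refine (exist _ (fun t => proj1_sig g (pm_mul S s t)) _).
  intros t t' H x. apply (proj2_sig g). now apply le_mul_l.
Defined.

Definition MonSP (A : SPoset S) : SPoset S.
Proof.
  refine (@Build_SPoset S (MonF A) (@mle A) (@mact A) _ _ _ _ _ _).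
  - intros a t x h; exact h.
  - intros a b H1 H2. apply monf_eq. extensionality t. extensionality x.
    apply propositional_extensionality; split; auto.
  - intros a b c H1 H2 t x h; auto.
  - intros a. apply monf_eq. simpl. extensionality t. now rewrite pm_mul1l.
  - intros a s t. apply monf_eq. simpl. extensionality w. now rewrite pm_assoc.
  - intros a a' s t H1 H2 w x h. simpl in *. apply H1.
    apply (proj2_sig a (pm_mul S s w)); auto.
    apply pm_compat; auto using pm_refl.
Defined.

Definition ProdSP (X Y : SPoset S) : SPoset S.
Proof.
  refine (@Build_SPoset S (sp_car X * sp_car Y)
            (fun p q => sp_le X (fst p) (fst q) /\ sp_le Y (snd p) (snd q))
            (fun p s => (sp_act X (fst p) s, sp_act Y (snd p) s)) _ _ _ _ _ _).
  - intros [a b]; split; apply sp_refl.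
  - intros [a b] [c d] [H1 H2] [H3 H4]; simpl in *; f_equal; apply sp_antisym; auto.
  - intros [a b] [c d] [e f] [H1 H2] [H3 H4]; simpl in *; split; eapply sp_trans; eauto.
  - intros [a b]; simpl; now rewrite !sp_act1.
  - intros [a b] s t; simpl; now rewrite !sp_actM.
  - intros [a b] [c d] s t [H1 H2] H; simpl in *; split; apply sp_act_mono; auto.
Defined.

Definition emb_fun (A : SPoset S) (a : sp_car A) : MonF A.
Proof.
  refine (exist _ (fun t x => sp_le A x (sp_act A a t)) _).
  intros t t' H x h. eapply sp_trans; [exact h|]. apply sp_act_mono; auto using sp_refl.
Defined.

Definition embH (A : SPoset S) : SHom A (MonSP A).
Proof.
  refine (@Build_SHom S A (MonSP A) (@emb_fun A) _ _).
  - intros a a' H t x h; simpl in *. eapply sp_trans; [exact h|].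
    apply sp_act_mono; auto using pm_refl.
  - intros a s. apply monf_eq; simpl. extensionality t. extensionality x.
    now rewrite sp_actM.
Defined.

Lemma embH_emb (A : SPoset S) (a a' : sp_car A) :
  sp_le (MonSP A) (embH A a) (embH A a') -> sp_le A a a'.
Proof.
  intros H. specialize (H (pm_one S) a). simpl in H. rewrite !sp_act1 in H.
  apply H. apply sp_refl.
Qed.

Definition iH (A B : SPoset S) (f : SHom A B) : SHom A (ProdSP (MonSP A) B).
Proof.
  refine (@Build_SHom S A (ProdSP (MonSP A) B) (fun a => (embH A a, f a)) _ _).
  - intros a a' H; split; simpl; [apply (sh_mono (embH A)) | apply (sh_mono f)]; auto.
  - intros a s; simpl. f_equal; [apply (sh_act (embH A)) | apply (sh_act f)].
Defined.

Definition sndH (X Y : SPoset S) : SHom (ProdSP X Y) Y.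
Proof.
  refine (@Build_SHom S (ProdSP X Y) Y snd _ _).
  - intros p q [H1 H2]; auto.
  - intros p s; reflexivity.
Defined.

Definition ext_fun (A A' B' : SPoset S) (l : SHom A' B') (u : SHom A' (MonSP A))
  (b : sp_car B') : MonF A.
Proof.
  refine (exist _ (fun t x => exists a, sp_le B' (l a) (sp_act B' b t)
                              /\ proj1_sig (u a) (pm_one S) x) _).
  intros t t' H x [a [h1 h2]]. exists a; split; auto.
  eapply sp_trans; [exact h1|]. apply sp_act_mono; auto using sp_refl.
Defined.

Definition extH (A A' B' : SPoset S) (l : SHom A' B') (u : SHom A' (MonSP A))
  : SHom B' (MonSP A).
Proof.
  refine (@Build_SHom S B' (MonSP A) (@ext_fun A A' B' l u) _ _).
  - intros b b' H t x [a [h1 h2]]. exists a; split; auto.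
    eapply sp_trans; [exact h1|]. apply sp_act_mono; auto using pm_refl.
  - intros b s. apply monf_eq; simpl. extensionality t. extensionality x.
    now rewrite sp_actM.
Defined.

Lemma extH_spec (A A' B' : SPoset S) (l : SHom A' B') (u : SHom A' (MonSP A)) :
  is_order_embedding l -> forall a, @extH A A' B' l u (l a) = u a.
Proof.
  intros Hl a. apply monf_eq. simpl. extensionality t. extensionality x.
  apply propositional_extensionality; split.
  - intros [a' [h1 h2]]. rewrite <- sh_act in h1. apply Hl in h1.
    pose proof (sh_mono u _ _ h1) as Hm. apply Hm in h2.
    rewrite (sh_act u) in h2. simpl in h2. rewrite pm_mulr1 in h2. exact h2.
  - intros h. exists (sp_act A' a t). split.
    + rewrite sh_act. apply sp_refl.
    + rewrite (sh_act u). simpl. rewrite pm_mulr1. exact h.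
Qed.

Definition dH (A A' B' B : SPoset S) (l : SHom A' B') (u : SHom A' (ProdSP (MonSP A) B))
  (v : SHom B' B) : SHom B' (ProdSP (MonSP A) B).
Proof.
  pose (u1 := @Build_SHom S A' (MonSP A) (fun a => fst (u a))
                (fun a a' H => proj1 (sh_mono u a a' H))
                (fun a s => f_equal fst (sh_act u a s))).
  refine (@Build_SHom S B' (ProdSP (MonSP A) B) (fun b => (@extH A A' B' l u1 b, v b)) _ _).
  - intros b b' H; split; simpl; [apply (sh_mono (@extH A A' B' l u1)) | apply (sh_mono v)]; auto.
  - intros b s; simpl. f_equal; [apply (sh_act (@extH A A' B' l u1)) | apply (sh_act v)].
Defined.

Lemma snd_rbox (A B : SPoset S) : rbox (@Emb S) (sndH (MonSP A) B).
Proof.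
  intros A' B' l Hl u v Hc. exists (@dH A A' B' B l u v). split.
  - intros a. simpl. pose proof (@extH_spec A A' B' l (@Build_SHom S A' (MonSP A) (fun a => fst (u a))
                (fun a a' H => proj1 (sh_mono u a a' H))
                (fun a s => f_equal fst (sh_act u a s))) Hl) as E. simpl in E. rewrite E.
    specialize (Hc a). simpl in Hc. rewrite <- Hc. destruct (u a); reflexivity.
  - intros b; reflexivity.
Qed.

Definition idH (B : SPoset S) : SHom B B :=
  @Build_SHom S B B (fun b => b) (fun a a' H => H) (fun a s => eq_refl).

End X.

Theorem mainTheorem3 (S : Pomonoid) :
  weak_factorization_system (@Emb S) (rbox (@Emb S)).
Proof.
  Arguments ProdSP {S}. Arguments MonSP {S}. Arguments sndH {S}. Arguments idH {S}. Arguments embH_emb {S A}. Arguments snd_rbox {S}. Arguments iH {S A B}.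
  assert (Fact : forall (A B : SPoset S) (f : SHom A B),
     exists (C : SPoset S) (l : SHom A C) (r : SHom C B),
       Emb l /\ rbox (@Emb S) r /\ (forall a, r (l a) = f a)).
  { intros A B f. exists (ProdSP (MonSP A) B), (iH f), (sndH (MonSP A) B). split; [|split].
    - intros a a'; split.
      + intros [H1 H2]. apply embH_emb; exact H1.
      + intros H. apply (sh_mono (iH f)); exact H.
    - apply snd_rbox.
    - intros a; reflexivity. }
  split; [exact Fact|split].
  - intros A B f; tauto.
  - intros A B l; split.
    + intros Hl C D r Hr. apply Hr; exact Hl.
    + intros Hl. destruct (Fact A B l) as [C [i [r [Hi [Hr Hc]]]]].
      destruct (Hl C B r Hr i (idH B) Hc) as [d [Hd1 Hd2]].
      intros a a'; split.
      * intros H. apply Hi. rewrite <- !Hd1. apply sh_mono; exact H.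
      * intros H. apply sh_mono; exact H.
Qed.
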